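(* Let $A=\cup_{n\ge0}A_n$ be a connected filtered (commutative) bialgebra. Then the free commutative extended Rota-Baxter algebra $\text{Ш}_e(A)$ on $A$, with the bialgebra structure $(\text{Ш}_e(A),\diamond,u_e,\Delta_e,\varepsilon_e)$, is also a connected filtered bialgebra, and hence a Hopf algebra.
   Context: $\mathbf{k}$ is a commutative unitary ring, $\lambda,\kappa\in\mathbf{k}$, $\mu$ a root of $t^2-\lambda t+\kappa$. A bialgebra $H=(H,m_H,\mu_H,\Delta_H,\varepsilon_H)$ is filtered if there are submodules $H_n$, $n\ge0$, with $H_n\subseteq H_{n+1}$, $H=\cup_n H_n$, $H_pH_q\subseteq H_{p+q}$, $\Delta_H(H_n)\subseteq\bigoplus_{p+q=n}H_p\otimes H_q$, and $H_n=\mathrm{im}\,\mu_H\oplus(H_n\cap\ker\varepsilon_H)$; it is connected if $H_0=\mathrm{im}\,\mu_H=\mathbf{k}1_H$. A connected filtered bialgebra is a Hopf algebra. $(\text{Ш}_e(A),\diamond,P_e,j_A)$ is the free commutative extended Rota-Baxter algebra of weight $(\lambda,\kappa)$ on $A$ (operators satisfying $P(x)P(y)=P(xP(y))+P(P(x)y)+\lambda P(xy)+\kappa xy$), with $\text{Ш}_e(A)=\bigoplus_{n\ge1}A^{\otimes n}$ and $P_e(\mathfrak{a})=1_A\otimes\mathfrak{a}$; $u_e(c)=c1_A$; $\varepsilon_e$ is the unique extended Rota-Baxter algebra homomorphism $\text{Ш}_e(A)\to\mathbf{k}$ with $\varepsilon_e\circ j_A=\varepsilon_A$, $\varepsilon_e\circ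 P_e=-\mu\varepsilon_e$; $\Delta_e$ is the unique extended Rota-Baxter algebra homomorphism $\text{Ш}_e(A)\to\text{Ш}_e(A)\otimes\text{Ш}_e(A)$ with $\Delta_e\circ j_A=\Delta_A$ and $\Delta_e\circ P_e=\bar P\circ\Delta_e$, $\bar P(\mathfrak{a}\otimes\mathfrak{b})=P_e(\mathfrak{a})\otimes\varepsilon_e(\mathfrak{b})1_A+\mu\mathfrak{a}\otimes\varepsilon_e(\mathfrak{b})1_A+\mathfrak{a}\otimes P_e(\mathfrak{b})$. The filtration on $\text{Ш}_e(A)$ used: $\deg(a_0\otimes\cdots\otimes a_m)=\sum_i\deg(a_i)+m$ with $\deg(a)=\min\{k: a\in A_k\}$. *)

(* Defs.v *)
From HB Require Import structures.
From mathcomp Require Import all_boot all_order all_algebra.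
Set Implicit Arguments. Unset Strict Implicit. Unset Printing Implicit Defensive.
Import GRing.Theory.
Local Open Scope ring_scope.

Section Defs.
Variable k : comPzRingType.

Definition klinear (M N : lmodType k) (f : M -> N) :=
  forall (a : k) x y, f (a *: x + y) = a *: f x + f y.

Definition kbilinear (M N P : lmodType k) (f : M -> N -> P) :=
  (forall m, klinear (f m)) /\ (forall n, klinear (fun m => f m n)).

Definition induced (M N T P : lmodType k) (t : M -> N -> T) (f : M -> N -> P)
  (g : T -> P) := klinear g /\ forall m n, g (t m n) = f m n.

Definition is_tensor (M N T : lmodType k) (t : M -> N -> T) :=
  kbilinear t /\
  forall (P : lmodType k) (f : M -> N -> P), kbilinear f ->
    exists g : T -> P, induced t f g /\
      forall g' : T -> P, induced t f g' -> forall x, g' x = g x.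

Definition is_tensor_alg (A B T : algType k) (t : A -> B -> T) :=
  is_tensor t /\ t 1 1 = 1 /\
  forall a b c d, t (a * c) (b * d) = t a b * t c d.

Definition alg_hom (A B : algType k) (f : A -> B) :=
  klinear f /\ f 1 = 1 /\ forall x y, f (x * y) = f x * f y.

Definition alg_hom_k (A : algType k) (f : A -> k) :=
  (forall (a : k) x y, f (a *: x + y) = a * f x + f y) /\ f 1 = 1 /\
  forall x y, f (x * y) = f x * f y.

Definition assoc_spec (H HH HL HR : lmodType k) (t : H -> H -> HH)
  (tL : HH -> H -> HL) (tR : H -> HH -> HR) (al : HL -> HR) :=
  klinear al /\ forall a b c, al (tL (t a b) c) = tR a (t b c).

(* Bialgebra (H, m, u, Delta, eps); H (x) H = (HH, t), (H(x)H)(x)H = (HL, tL),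
   H(x)(H(x)H) = (HR, tR). *)
Definition is_bialgebra (H HH : algType k) (t : H -> H -> HH)
  (HL HR : lmodType k) (tL : HH -> H -> HL) (tR : H -> HH -> HR)
  (Delta : H -> HH) (eps : H -> k) :=
  alg_hom Delta /\ alg_hom_k eps /\
  (* coassociativity: (Delta (x) id) Delta = (id (x) Delta) Delta *)
  (forall (f1 : HH -> HL) (f2 : HH -> HR) (al : HL -> HR),
     induced t (fun a b => tL (Delta a) b) f1 ->
     induced t (fun a b => tR a (Delta b)) f2 ->
     assoc_spec t tL tR al ->
     forall x, al (f1 (Delta x)) = f2 (Delta x)) /\
  (* counit: (eps (x) id) Delta = id = (id (x) eps) Delta *)
  (forall g : HH -> H, induced t (fun a b => eps a *: b) g ->
     forall x, g (Delta x) = x) /\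
  (forall g : HH -> H, induced t (fun a b => eps b *: a) g ->
     forall x, g (Delta x) = x).

Definition has_antipode (H HH : algType k) (t : H -> H -> HH)
  (Delta : H -> HH) (eps : H -> k) :=
  exists s : H -> H, klinear s /\
    forall g1 g2 : HH -> H,
      induced t (fun a b => s a * b) g1 ->
      induced t (fun a b => a * s b) g2 ->
      forall x, g1 (Delta x) = eps x *: 1 /\ g2 (Delta x) = eps x *: 1.

Definition submodule (M : lmodType k) (U : M -> Prop) :=
  U 0 /\ forall (a : k) x y, U x -> U y -> U (a *: x + y).

Inductive span (M : lmodType k) (G : M -> Prop) : M -> Prop :=
| span0 : span G 0
| span_gen x : G x -> span G x
| span_comb (a : k) x y : span G x -> span G y -> span G (a *: x + y).

(* Filtered bialgebra with filtration Hf (H_n = Hf n); the condition on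
   Delta uses the image of H_p (x) H_q in H (x) H. *)
Definition is_filtered (H HH : algType k) (t : H -> H -> HH)
  (Delta : H -> HH) (eps : H -> k) (Hf : nat -> H -> Prop) :=
  (forall n, submodule (Hf n)) /\
  (forall n x, Hf n x -> Hf n.+1 x) /\
  (forall x, exists n, Hf n x) /\
  (forall p q x y, Hf p x -> Hf q y -> Hf (p + q)%N (x * y)) /\
  (forall n x, Hf n x ->
     span (fun z => exists p q u v, (p + q = n)%N /\ Hf p u /\ Hf q v /\ z = t u v)
          (Delta x)) /\
  (* H_n = im u (+) (H_n cap ker eps) *)
  (forall n,
     (forall c : k, Hf n (c *: 1)) /\
     (forall x, Hf n x -> exists (c : k) y, Hf n y /\ eps y = 0 /\ x = c *: 1 + y) /\
     (forall c : k, Hf n (c *: 1) -> eps (c *: 1) = 0 -> c *: (1 : H) = 0)).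

Definition is_connected_filtered (H HH : algType k) (t : H -> H -> HH)
  (Delta : H -> HH) (eps : H -> k) (Hf : nat -> H -> Prop) :=
  is_filtered t Delta eps Hf /\
  forall x, Hf 0%N x <-> exists c : k, x = c *: 1.

Definition is_extRB (lambda kappa : k) (R : algType k) (P : R -> R) :=
  klinear P /\
  forall x y, P x * P y = P (x * P y) + P (P x * y) + lambda *: P (x * y)
                          + kappa *: (x * y).

Definition is_free_comm_extRB (lambda kappa : k) (A S : comAlgType k)
  (P : S -> S) (j : A -> S) :=
  is_extRB lambda kappa P /\ alg_hom j /\
  forall (R : comAlgType k) (Q : R -> R) (f : A -> R),
    is_extRB lambda kappa Q -> alg_hom f ->
    exists g : S -> R, (alg_hom g /\ (forall x, g (P x) = Q (g x)) /\
                        forall a, g (j a) = f a) /\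
      forall g' : S -> R, (alg_hom g' /\ (forall x, g' (P x) = Q (g' x)) /\
                           forall a, g' (j a) = f a) -> forall x, g' x = g x.

Definition is_deg (A : lmodType k) (Af : nat -> A -> Prop) (a : A) (d : nat) :=
  Af d a /\ forall e, Af e a -> (d <= e)%N.

(* the element a0 (x) a1 (x) ... (x) am of Sha_e(A) = a0 <> P(a1 (x) ... (x) am) *)
Fixpoint sha_word (A S : algType k) (P : S -> S) (j : A -> S) (a0 : A)
  (l : seq A) : S :=
  match l with
  | [::] => j a0
  | a1 :: l' => j a0 * P (sha_word P j a1 l')
  end.

Definition sha_filtration (A S : algType k) (P : S -> S) (j : A -> S)
  (Af : nat -> A -> Prop) (n : nat) : S -> Prop :=
  span (fun z => exists (a0 : A) (l : seq A) (ds : seq nat),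
          z = sha_word P j a0 l /\
          size ds = (size l).+1 /\
          (forall i, (i < (size l).+1)%N -> is_deg Af (nth a0 (a0 :: l) i) (nth 0%N ds i)) /\
          (sumn ds + size l <= n)%N).

End Defs.

(* Main.v *)
Require Import Defs.
From HB Require Import structures.
From mathcomp Require Import all_boot all_order all_algebra.
From mathcomp Require Import boolp functions.
From mathcomp Require Import zify.
Import GRing.Theory.
Local Open Scope ring_scope.
Set Implicit Arguments. Unset Strict Implicit. Unset Printing Implicit Defensive.
Section Gen.
Variable k : comPzRingType.

Section Lin.
Variables (M N : lmodType k) (f : M -> N) (Hf : klinear f).
Lemma klin0 : f 0 = 0.
Proof. have h := Hf 1 0 0; rewrite scaler0 addr0 scale1r in h.
by have := congr1 (fun z => z - f 0) h; rewrite subrr addrK. Qed.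
Lemma klinD x y : f (x + y) = f x + f y.
Proof. by have := Hf 1 x y; rewrite !scale1r. Qed.
Lemma klinZ a x : f (a *: x) = a *: f x.
Proof. by have := Hf a x 0; rewrite !addr0 klin0 addr0. Qed.
Lemma klinN x : f (- x) = - f x.
Proof. by rewrite -scaleN1r klinZ scaleN1r. Qed.
Lemma klinB x y : f (x - y) = f x - f y.
Proof. by rewrite klinD klinN. Qed.
End Lin.

Lemma klin_comp (M N P : lmodType k) (f : M -> N) (g : N -> P) :
  klinear f -> klinear g -> klinear (fun x => g (f x)).
Proof. by move=> Hf Hg a x y; rewrite Hf Hg. Qed.

Lemma klin_id (M : lmodType k) : klinear (fun x : M => x).
Proof. by []. Qed.

Lemma klin_comb (M N : lmodType k) (f g : M -> N) (c : k) :
  klinear f -> klinear g -> klinear (fun x => c *: f x + g x).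
Proof.
move=> Hf Hg a x y; rewrite Hf Hg !scalerDr !scalerA [c * a]mulrC.
by rewrite addrACA.
Qed.

Lemma klin_add (M N : lmodType k) (f g : M -> N) :
  klinear f -> klinear g -> klinear (fun x => f x + g x).
Proof. by move=> Hf Hg; have := klin_comb 1 Hf Hg; under eq_fun do rewrite scale1r. Qed.

Lemma klin_scale (M N : lmodType k) (f : M -> N) (c : k) :
  klinear f -> klinear (fun x => c *: f x).
Proof.
move=> Hf a x y; rewrite Hf scalerDr !scalerA mulrC. done.
Qed.

Lemma klin_cst0 (M N : lmodType k) : klinear (fun _ : M => 0 : N).
Proof. by move=> a x y; rewrite scaler0 addr0. Qed.

Definition klinK (M : lmodType k) (f : M -> k) :=
  forall (a : k) x y, f (a *: x + y) = a * f x + f y.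

Lemma klinK_scale1 (M : lmodType k) (N : lalgType k) (f : M -> k) :
  klinK f -> klinear (fun x => f x *: (1 : N)).
Proof. by move=> Hf a x y; rewrite Hf scalerDl scalerA. Qed.

Section LinK.
Variables (M : lmodType k) (f : M -> k) (Hf : klinK f).
Lemma klinK0 : f 0 = 0.
Proof. have h := Hf 1 0 0; rewrite scaler0 addr0 mul1r in h.
by have := congr1 (fun z => z - f 0) h; rewrite subrr addrK. Qed.
Lemma klinKD x y : f (x + y) = f x + f y.
Proof. by have := Hf 1 x y; rewrite scale1r mul1r. Qed.
Lemma klinKZ a x : f (a *: x) = a * f x.
Proof. by have := Hf a x 0; rewrite !addr0 klinK0 addr0. Qed.
Lemma klinKB x y : f (x - y) = f x - f y.
Proof. by rewrite klinKD -scaleN1r klinKZ mulN1r. Qed.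
End LinK.

Definition indm (M N T P : lmodType k) (t : M -> N -> T) (f : M -> N -> P) : T -> P :=
  match pselect (exists g, induced t f g) with
  | left e => projT1 (cid e)
  | right _ => fun _ => 0 end.

Section Tensor.
Variables (M N T : lmodType k) (t : M -> N -> T) (Ht : is_tensor t).

Lemma indmP (P : lmodType k) (f : M -> N -> P) : kbilinear f -> induced t f (indm t f).
Proof.
move=> Hf; rewrite /indm; case: pselect => [e|ne]; first by case: (cid e).
by exfalso; apply: ne; have [g [Hg _]] := Ht.2 P f Hf; exists g.
Qed.

Lemma indm_lin (P : lmodType k) (f : M -> N -> P) : kbilinear f -> klinear (indm t f).
Proof. by move=> /indmP []. Qed.

Lemma indm_t (P : lmodType k) (f : M -> N -> P) : kbilinear f -> forall m n, indm t f (t m n) = f m n.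
Proof. by move=> /indmP []. Qed.

Lemma t_bilin : kbilinear t.
Proof. by case: Ht. Qed.

Lemma tlinl m : klinear (t m). Proof. exact: t_bilin.1. Qed.
Lemma tlinr n : klinear (fun m => t m n). Proof. exact: t_bilin.2. Qed.

Lemma tens_ext (P : lmodType k) (g g' : T -> P) : klinear g -> klinear g' ->
  (forall m n, g (t m n) = g' (t m n)) -> forall x, g x = g' x.
Proof.
move=> Hg Hg' E x.
have Hf : kbilinear (fun m n => g (t m n)).
  split=> [m|n] a u v /=; first by rewrite (tlinl m) Hg.
  by rewrite (tlinr n) Hg.
have [G [_ HG]] := Ht.2 P _ Hf.
rewrite (HG g) ?(HG g') //; split=> //.
Qed.

Lemma induced_indm (P : lmodType k) (f : M -> N -> P) (g : T -> P) :
  kbilinear f -> induced t f g -> forall x, g x = indm t f x.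
Proof.
move=> Hf [Hg1 Hg2]; apply: tens_ext => //; first exact: indm_lin.
by move=> m n; rewrite Hg2 indm_t.
Qed.

Lemma indm_param (C P : lmodType k) (fam : C -> M -> N -> P) :
  (forall c, kbilinear (fam c)) -> (forall m n, klinear (fun c => fam c m n)) ->
  forall Y, klinear (fun c => indm t (fam c) Y).
Proof.
move=> Hb Hl Y a c1 c2.
have := @tens_ext P (fun Y => indm t (fam (a *: c1 + c2)) Y)
   (fun Y => a *: indm t (fam c1) Y + indm t (fam c2) Y).
apply.
- exact: indm_lin.
- by apply: klin_comb; apply: indm_lin.
- by move=> m n; rewrite !indm_t // Hl.
Qed.

Lemma span_ind_lin (P : lmodType k) (G : T -> Prop) (g g' : T -> P) :
  klinear g -> klinear g' -> (forall z, G z -> g z = g' z) -> forall z, Defs.span G z -> g z = g' z.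
Proof.
move=> Hg Hg' E z; elim=> [|x Gx|a x y _ IHx _ IHy]; first by rewrite !klin0.
  exact: E.
by rewrite Hg Hg' IHx IHy.
Qed.

End Tensor.

Lemma bilin_of (M N P : lmodType k) (f : M -> N -> P) :
  (forall m, klinear (f m)) -> (forall n, klinear (fun m => f m n)) -> kbilinear f.
Proof. by move=> *; split. Qed.

Lemma tens_ext2L (M N T N2 T2 P : lmodType k) (t : M -> N -> T) (t2 : T -> N2 -> T2)
  (Ht : is_tensor t) (Ht2 : is_tensor t2) (g g' : T2 -> P) : klinear g -> klinear g' ->
  (forall a b c, g (t2 (t a b) c) = g' (t2 (t a b) c)) -> forall x, g x = g' x.
Proof.
move=> Hg Hg' E; apply: (tens_ext Ht2) => // Y c.
apply: (tens_ext Ht (g := fun Y => g (t2 Y c)) (g' := fun Y => g' (t2 Y c))) => //.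
- by apply: klin_comp => //; exact: tlinr.
- by apply: klin_comp => //; exact: tlinr.
Qed.

Lemma tens_ext2R (M N T M2 T2 P : lmodType k) (t : M -> N -> T) (t2 : M2 -> T -> T2)
  (Ht : is_tensor t) (Ht2 : is_tensor t2) (g g' : T2 -> P) : klinear g -> klinear g' ->
  (forall a b c, g (t2 a (t b c)) = g' (t2 a (t b c))) -> forall x, g x = g' x.
Proof.
move=> Hg Hg' E; apply: (tens_ext Ht2) => // a Y.
apply: (tens_ext Ht (g := fun Y => g (t2 a Y)) (g' := fun Y => g' (t2 a Y))) => //.
- by apply: klin_comp => //; exact: tlinl.
- by apply: klin_comp => //; exact: tlinl.
Qed.

Lemma bil_epsl (M : lmodType k) (N : lmodType k) (e : M -> k) :
  klinK e -> kbilinear (fun (a : M) (b : N) => e a *: b).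
Proof.
move=> He; split=> [m|n] a u v /=; last by rewrite He scalerDl scalerA.
by rewrite scalerDr scalerA mulrC -scalerA.
Qed.

Lemma bil_epsr (M : lmodType k) (N : lmodType k) (e : N -> k) :
  klinK e -> kbilinear (fun (a : M) (b : N) => e b *: a).
Proof.
move=> He; split=> [m|n] a u v /=; first by rewrite He scalerDl scalerA.
by rewrite scalerDr scalerA mulrC -scalerA.
Qed.

Lemma klin_fun (M N : lmodType k) (X : Type) (F : M -> X -> N) :
  (forall w, klinear (fun m => F m w)) -> klinear (F : M -> (X -> N)).
Proof. by move=> HF a x y; apply: funext => w /=; rewrite HF. Qed.

Lemma klin_eval (M N : lmodType k) (X : Type) (F : M -> (X -> N)) w :
  klinear F -> klinear (fun m => F m w).
Proof. by move=> HF a x y; rewrite HF. Qed.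

Lemma assoc_exists (H HH HL HR : lmodType k) (t : H -> H -> HH) (tL : HH -> H -> HL)
  (tR : H -> HH -> HR) : is_tensor t -> is_tensor tL -> is_tensor tR ->
  exists al, assoc_spec t tL tR al.
Proof.
move=> Htt HtL HtR.
have Bc : forall c, kbilinear (fun a b => tR a (t b c)).
  move=> c; split=> [m|n]; first exact: (klin_comp (tlinr Htt c) (tlinl HtR m)).
  exact: tlinr.
have Bal : kbilinear (fun Y c => indm t (fun a b => tR a (t b c)) Y).
  split=> [Y|c]; last exact: indm_lin.
  apply: (indm_param Htt Bc) => m n.
  exact: (klin_comp (tlinl Htt n) (tlinl HtR m)).
exists (indm tL (fun Y c => indm t (fun a b => tR a (t b c)) Y)).
split; first exact: indm_lin.
by move=> a b c; rewrite (indm_t HtL) // (indm_t Htt).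
Qed.

End Gen.
Section Hopf.
Variables (k : comPzRingType) (H HH : algType k) (t : H -> H -> HH)
  (HL HR : lmodType k) (tL : HH -> H -> HL) (tR : H -> HH -> HR)
  (Delta : H -> HH) (eps : H -> k) (Fh : nat -> H -> Prop).
Hypotheses (Ht : is_tensor_alg t) (HtL : is_tensor tL) (HtR : is_tensor tR)
  (HB : is_bialgebra t tL tR Delta eps) (HC : is_connected_filtered t Delta eps Fh).

Let Htt : is_tensor t := Ht.1.
Let DeltaL : klinear Delta := HB.1.1.
Let epsL : klinK eps := HB.2.1.1.
Let eps1 : eps 1 = 1 := HB.2.1.2.1.

Lemma klin_mulr (R : lalgType k) (w : R) : klinear (fun z : R => z * w).
Proof. by move=> a x y; rewrite mulrDl scalerAl. Qed.
Lemma klin_mull (R : algType k) (w : R) : klinear (fun z : R => w * z).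
Proof. by move=> a x y; rewrite mulrDr scalerAr. Qed.

Lemma bil_mul (f g : H -> H) : klinear f -> klinear g -> kbilinear (fun a b => f a * g b).
Proof.
move=> Hf Hg; split=> [m|n].
  exact: (klin_comp Hg (klin_mull (f m))).
exact: (klin_comp Hf (klin_mulr (g n))).
Qed.

Definition conv (f g : H -> H) (x : H) : H := indm t (fun a b => f a * g b) (Delta x).
Definition ue (x : H) : H := eps x *: 1.
Definition phi (x : H) : H := x - eps x *: 1.

Lemma ue_lin : klinear ue. Proof. exact: klinK_scale1. Qed.
Lemma phi_lin : klinear phi.
Proof.
move=> a x y; rewrite /phi epsL scalerDl -scalerA scalerBr.
by rewrite addrACA opprD.
Qed.

Lemma conv_lin f g : klinear f -> klinear g -> klinear (conv f g).
Proof. by move=> Hf Hg; apply: klin_comp => //; apply: indm_lin => //; apply: bil_mul. Qed.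

Lemma conv_ext f f' g g' x : (forall y, f y = f' y) -> (forall y, g y = g' y) ->
  conv f g x = conv f' g' x.
Proof. by move=> E1 E2; rewrite (funext E1) (funext E2). Qed.

Lemma conv_addl f1 f2 g c x : klinear f1 -> klinear f2 -> klinear g ->
  conv (fun y => c *: f1 y + f2 y) g x = c *: conv f1 g x + conv f2 g x.
Proof.
move=> H1 H2 Hg; rewrite /conv.
have L1 := indm_lin Htt (bil_mul H1 Hg); have L2 := indm_lin Htt (bil_mul H2 Hg).
have L3 := indm_lin Htt (bil_mul (klin_comb c H1 H2) Hg).
apply: (tens_ext Htt L3 (klin_comb c L1 L2)) => m n.
rewrite !indm_t //; (try by apply: bil_mul => //; apply: klin_comb); by rewrite mulrDl scalerAl.
Qed.

Lemma conv_addr f g1 g2 c x : klinear f -> klinear g1 -> klinear g2 ->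
  conv f (fun y => c *: g1 y + g2 y) x = c *: conv f g1 x + conv f g2 x.
Proof.
move=> Hf H1 H2; rewrite /conv.
have L1 := indm_lin Htt (bil_mul Hf H1); have L2 := indm_lin Htt (bil_mul Hf H2).
have L3 := indm_lin Htt (bil_mul Hf (klin_comb c H1 H2)).
apply: (tens_ext Htt L3 (klin_comb c L1 L2)) => m n.
rewrite !indm_t //; (try by apply: bil_mul => //; apply: klin_comb); by rewrite mulrDr scalerAr.
Qed.

Lemma conv_ue_r f x : klinear f -> conv f ue x = f x.
Proof.
move=> Hf; pose gc := indm t (fun a b => eps b *: a).
have Bgc : kbilinear (fun a b : H => eps b *: a).
  split=> [m|n] a u v /=; first by rewrite epsL scalerDl scalerA.
  by rewrite scalerDr scalerA mulrC -scalerA.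
have Hgc := indmP Htt Bgc.
rewrite -{2}(HB.2.2.2.2 gc Hgc x) /conv.
apply: (tens_ext Htt (indm_lin Htt (bil_mul Hf ue_lin)) (klin_comp Hgc.1 Hf)) => m n.
rewrite (indm_t Htt); last exact: bil_mul ue_lin.
by rewrite Hgc.2 (klinZ Hf) /ue -scalerAr mulr1.
Qed.

Lemma conv_ue_l f x : klinear f -> conv ue f x = f x.
Proof.
move=> Hf; pose gc := indm t (fun a b => eps a *: b).
have Bgc : kbilinear (fun a b : H => eps a *: b).
  split=> [m|n] a u v /=; last by rewrite epsL scalerDl scalerA.
  by rewrite scalerDr scalerA mulrC -scalerA.
have Hgc := indmP Htt Bgc.
rewrite -{2}(HB.2.2.2.1 gc Hgc x) /conv.
apply: (tens_ext Htt (indm_lin Htt (bil_mul ue_lin Hf)) (klin_comp Hgc.1 Hf)) => m n.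
rewrite (indm_t Htt); last exact: bil_mul ue_lin Hf.
by rewrite Hgc.2 (klinZ Hf) /ue -scalerAl mul1r.
Qed.


Lemma conv_assoc f g h x : klinear f -> klinear g -> klinear h ->
  conv (conv f g) h x = conv f (conv g h) x.
Proof.
move=> Hf Hg Hh.
have Bf1 : kbilinear (fun a b => tL (Delta a) b).
  split=> [m|n]; first exact: tlinl.
  exact: (klin_comp DeltaL (tlinr HtL n)).
have Bf2 : kbilinear (fun a b => tR a (Delta b)).
  split=> [m|n]; last exact: tlinr.
  exact: (klin_comp DeltaL (tlinl HtR m)).
have Bc : forall c, kbilinear (fun a b => tR a (t b c)).
  move=> c; split=> [m|n]; first exact: (klin_comp (tlinr Htt c) (tlinl HtR m)).
  exact: tlinr.
have Bal : kbilinear (fun Y c => indm t (fun a b => tR a (t b c)) Y).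
  split=> [Y|c]; last exact: indm_lin.
  apply: (indm_param Htt Bc) => m n.
  exact: (klin_comp (tlinl Htt n) (tlinl HtR m)).
pose f1 := indm t (fun a b => tL (Delta a) b).
pose f2 := indm t (fun a b => tR a (Delta b)).
pose al := indm tL (fun Y c => indm t (fun a b => tR a (t b c)) Y).
have Hal : assoc_spec t tL tR al.
  split; first exact: indm_lin.
  by move=> a b c; rewrite /al (indm_t HtL) // (indm_t Htt).
have CA := HB.2.2.1 f1 f2 al (indmP Htt Bf1) (indmP Htt Bf2) Hal x.
have Bfg := bil_mul Hf Hg; have Bgh := bil_mul Hg Hh.
have BL : kbilinear (fun Y c => indm t (fun a b => f a * g b) Y * h c).
  split=> [Y|c]; first exact: (klin_comp Hh (klin_mull _)).
  exact: (klin_comp (indm_lin Htt Bfg) (klin_mulr _)).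
have BR : kbilinear (fun a Y => f a * indm t (fun b c => g b * h c) Y).
  split=> [a|Y]; first exact: (klin_comp (indm_lin Htt Bgh) (klin_mull _)).
  exact: (klin_comp Hf (klin_mulr _)).
pose ThL := indm tL (fun Y c => indm t (fun a b => f a * g b) Y * h c).
pose ThR := indm tR (fun a Y => f a * indm t (fun b c => g b * h c) Y).
have S1 : forall Y, indm t (fun a b => conv f g a * h b) Y = ThL (f1 Y).
  apply: (tens_ext Htt).
  - exact: (indm_lin Htt (bil_mul (conv_lin Hf Hg) Hh)).
  - exact: (klin_comp (indm_lin Htt Bf1) (indm_lin HtL BL)).
  move=> a b; rewrite (indm_t Htt); last exact: (bil_mul (conv_lin Hf Hg) Hh).
  by rewrite /f1 (indm_t Htt) // /ThL (indm_t HtL).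
have S2 : forall Y, indm t (fun a b => f a * conv g h b) Y = ThR (f2 Y).
  apply: (tens_ext Htt).
  - exact: (indm_lin Htt (bil_mul Hf (conv_lin Hg Hh))).
  - exact: (klin_comp (indm_lin Htt Bf2) (indm_lin HtR BR)).
  move=> a b; rewrite (indm_t Htt); last exact: (bil_mul Hf (conv_lin Hg Hh)).
  by rewrite /f2 (indm_t Htt) // /ThR (indm_t HtR).
have S3 : forall Z, ThR (al Z) = ThL Z.
  apply: (tens_ext2L Htt HtL).
  - exact: (klin_comp (indm_lin HtL Bal) (indm_lin HtR BR)).
  - exact: (indm_lin HtL BL).
  move=> a b c; rewrite Hal.2 /ThR (indm_t HtR) // (indm_t Htt) //.
  by rewrite /ThL (indm_t HtL) // (indm_t Htt) // mulrA.
rewrite /conv S1 S2 -CA S3 //.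
Qed.

Lemma phi_scal c : phi (c *: 1) = 0.
Proof. by rewrite /phi (klinKZ epsL) eps1 mulr1 subrr. Qed.

Let HF := HC.1.
Lemma Fh_sub n : submodule (Fh n). Proof. exact: HF.1. Qed.
Lemma Fh_mono n m x : (n <= m)%N -> Fh n x -> Fh m x.
Proof.
move=> /subnK <-; elim: (m - n)%N => [//|d IH] Hx.
by rewrite addSn; apply: HF.2.1; apply: IH.
Qed.

Fixpoint pw (m : nat) : H -> H := if m is m'.+1 then conv (pw m') phi else ue.

Lemma pw_lin m : klinear (pw m).
Proof. elim: m => [|m IH] /=; [exact: ue_lin | exact: conv_lin IH phi_lin]. Qed.

Lemma pw_vanish m n x : (n < m)%N -> Fh n x -> pw m x = 0.
Proof.
elim: m n x => [//|m IH] n x Hnm Hx /=.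
have Sp := HF.2.2.2.2.1 n x Hx.
rewrite /conv.
have B := bil_mul (pw_lin m) phi_lin.
have := span_ind_lin (indm_lin Htt B) (@klin_cst0 _ _ _) _ Sp; apply.
move=> z [p [q [u [v [Epq [Hu [Hv ->]]]]]]].
rewrite (indm_t Htt) //.
case: q Epq Hv => [|q] Epq Hv.
  by have [c ->] := (HC.2 v).1 Hv; rewrite phi_scal mulr0.
rewrite (IH p u) ?mul0r //.
by move: Hnm; rewrite -Epq; rewrite addnS ltnS => /(leq_trans _); apply; rewrite leq_addr.
Qed.

Lemma pw_comm m x : conv phi (pw m) x = pw m.+1 x.
Proof.
elim: m x => [|m IH] x /=.
  by rewrite conv_ue_r ?conv_ue_l //; exact: phi_lin.
rewrite -conv_assoc //; [|exact: phi_lin|exact: pw_lin|exact: phi_lin].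
by apply: conv_ext => // y; rewrite IH.
Qed.

Fixpoint sp (n : nat) (x : H) : H :=
  if n is n'.+1 then (-1) ^+ n *: pw n x + sp n' x else pw 0 x.

Lemma spS n x : sp n.+1 x = (-1) ^+ n.+1 *: pw n.+1 x + sp n x.
Proof. by []. Qed.
Lemma pwS m : pw m.+1 = conv (pw m) phi.
Proof. by []. Qed.

Lemma sp_lin n : klinear (sp n).
Proof. elim: n => [|n IH]; first exact: ue_lin. exact: (klin_comb _ (pw_lin n.+1) IH). Qed.

Lemma sp_stable n d x : Fh n x -> sp (n + d) x = sp n x.
Proof.
move=> Hx; elim: d => [|d IH]; first by rewrite addn0.
by rewrite addnS spS IH (pw_vanish _ Hx) ?scaler0 ?add0r // ltnS leq_addr.
Qed.

Lemma id_split y : y = 1 *: ue y + phi y.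
Proof. by rewrite scale1r /ue /phi addrC subrK. Qed.

Lemma conv_sp_id n x : conv (sp n) (fun y => y) x = ue x + (-1) ^+ n *: pw n.+1 x.
Proof.
elim: n x => [|n IH] x.
  change (conv ue (fun y => y) x = ue x + 1 *: conv ue phi x).
  rewrite conv_ue_l // scale1r conv_ue_l; last exact: phi_lin.
  by rewrite /ue /phi addrC subrK.
change (conv (fun y => (-1) ^+ n.+1 *: pw n.+1 y + sp n y) (fun y => y) x =
  ue x + (-1) ^+ n.+1 *: conv (pw n.+1) phi x).
rewrite conv_addl; [|exact: pw_lin|exact: sp_lin|exact: klin_id].
rewrite IH (conv_ext (f:=pw n.+1) (f':=pw n.+1) (g:=fun y => y) (g':=fun y => 1 *: ue y + phi y)) //; last exact: id_split.
rewrite conv_addr; [|exact: pw_lin|exact: ue_lin|exact: phi_lin].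
rewrite conv_ue_r; last exact: pw_lin.
rewrite scale1r scalerDr addrC !addrA; congr (_ + _).
by rewrite exprS mulN1r scaleNr addrK.
Qed.

Lemma conv_id_sp n x : conv (fun y => y) (sp n) x = ue x + (-1) ^+ n *: pw n.+1 x.
Proof.
elim: n x => [|n IH] x.
  change (conv (fun y => y) ue x = ue x + 1 *: conv ue phi x).
  rewrite conv_ue_r // scale1r conv_ue_l; last exact: phi_lin.
  by rewrite /ue /phi addrC subrK.
change (conv (fun y => y) (fun y => (-1) ^+ n.+1 *: pw n.+1 y + sp n y) x =
  ue x + (-1) ^+ n.+1 *: conv (pw n.+1) phi x).
rewrite conv_addr; [|exact: klin_id|exact: pw_lin|exact: sp_lin].
rewrite IH (conv_ext (g:=pw n.+1) (g':=pw n.+1) (f:=fun y => y) (f':=fun y => 1 *: ue y + phi y)) //; last exact: id_split.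
rewrite conv_addl; [|exact: ue_lin|exact: phi_lin|exact: pw_lin].
rewrite conv_ue_l; last exact: pw_lin.
rewrite pw_comm.
rewrite scale1r scalerDr addrC !addrA; congr (_ + _).
by rewrite exprS mulN1r scaleNr addrK.
Qed.

Lemma hopf_antipode : has_antipode t Delta eps.
Proof.
have [Nf HN] := choice HF.2.2.1.
have E : forall n1 n2 x, Fh n1 x -> (n1 <= n2)%N -> sp n2 x = sp n1 x.
  by move=> n1 n2 x Hx Hle; rewrite -(subnKC Hle) sp_stable.
have sE : forall n x, Fh n x -> sp (Nf x) x = sp n x.
  move=> n x Hx.
  by rewrite -(E (Nf x) (maxn n (Nf x))) ?leq_maxr // (E n (maxn n (Nf x))) ?leq_maxl.
pose s := fun x => sp (Nf x) x.
have Hs : klinear s.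
  move=> a x y.
  pose n := maxn (Nf x) (Nf y).
  have Hx : Fh n x by apply: (Fh_mono (leq_maxl _ _)).
  have Hy : Fh n y by apply: (Fh_mono (leq_maxr _ _)).
  have Hxy : Fh n (a *: x + y) by apply: (Fh_sub n).2.
  by rewrite /s (sE _ _ Hx) (sE _ _ Hy) (sE _ _ Hxy) sp_lin.
exists s; split => // g1 g2 Hg1 Hg2 x.
have [n Hx] := HF.2.2.1 x.
have Sp := HF.2.2.2.2.1 n x Hx.
have B1 := bil_mul Hs (@klin_id _ H).
have B2 := bil_mul (@klin_id _ H) Hs.
have B1' := bil_mul (sp_lin n) (@klin_id _ H).
have B2' := bil_mul (@klin_id _ H) (sp_lin n).
rewrite (induced_indm Htt B1 Hg1) (induced_indm Htt B2 Hg2).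
have E1 : indm t (fun a b => s a * b) (Delta x) = conv (sp n) (fun y => y) x.
  rewrite /conv; apply: (span_ind_lin (indm_lin Htt B1) (indm_lin Htt B1') _ Sp).
  move=> z [p [q [u [v [Epq [Hu [Hv ->]]]]]]].
  rewrite !(indm_t Htt) //= /s (sE n u) //.
  by apply: (Fh_mono _ Hu); rewrite -Epq leq_addr.
have E2 : indm t (fun a b => a * s b) (Delta x) = conv (fun y => y) (sp n) x.
  rewrite /conv; apply: (span_ind_lin (indm_lin Htt B2) (indm_lin Htt B2') _ Sp).
  move=> z [p [q [u [v [Epq [Hu [Hv ->]]]]]]].
  rewrite !(indm_t Htt) //= /s (sE n v) //.
  by apply: (Fh_mono _ Hv); rewrite -Epq leq_addl.
rewrite E1 E2 conv_sp_id conv_id_sp (pw_vanish (ltnSn n) Hx) scaler0 addr0.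
by split.
Qed.

End Hopf.
Section FreeInd.
Variables (k : comPzRingType) (lambda kappa : k) (A S : comAlgType k)
  (P : S -> S) (j : A -> S).
Hypothesis HS : is_free_comm_extRB lambda kappa P j.
Variable C : S -> Prop.
Hypotheses (Clin : forall a x y, C x -> C y -> C (a *: x + y))
  (Cmul : forall x y, C x -> C y -> C (x * y)) (Cj : forall a, C (j a))
  (CP : forall x, C x -> C (P x)).

Let jlin : klinear j := HS.2.1.1.
Let C0 : C 0. Proof. by rewrite -(klin0 jlin). Qed.
Let C1 : C 1. Proof. by rewrite -HS.2.1.2.1. Qed.

Definition Cb : {pred S} := fun x => `[< C x >].
Lemma Cb_closed : GRing.subsemialg_closed Cb.
Proof.
split.
- by apply/asboolP.
- split; first by apply/asboolP.
  move=> x y /asboolP Hx /asboolP Hy; apply/asboolP.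
  by rewrite -[x]scale1r; apply: Clin.
- move=> a x /asboolP Hx; apply/asboolP.
  by rewrite -[a *: x]addr0; apply: Clin.
- by move=> x y /asboolP Hx /asboolP Hy; apply/asboolP; apply: Cmul.
Qed.
Definition SubT := {x : S | x \in Cb}.
HB.instance Definition _ := [isSub for (@sval S _ : SubT -> S)].
HB.instance Definition _ := [Choice of SubT by <:].
HB.instance Definition _ := GRing.SubChoice_isSubAlgebra.Build k S Cb SubT Cb_closed.
HB.instance Definition _ := GRing.SubPzRing_isSubComPzRing.Build S Cb SubT.

Lemma CbP x : C x -> x \in Cb. Proof. by move=> h; apply/asboolP. Qed.

Definition QT (r : SubT) : SubT := exist _ (P (val r)) (CbP (CP (asboolW (valP r)))).
Definition jT (a : A) : SubT := exist _ (j a) (CbP (Cj a)).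

Lemma free_ind x : C x.
Proof.
have HP := HS.1.
have QTRB : is_extRB lambda kappa QT.
  split.
    by move=> a x1 y1; apply: val_inj => /=; rewrite HP.1.
  by move=> x1 y1; apply: val_inj => /=; rewrite HP.2.
have jTh : alg_hom jT.
  split; first by move=> a x1 y1; apply: val_inj => /=; rewrite jlin.
  split; first by apply: val_inj => /=; rewrite HS.2.1.2.1.
  by move=> x1 y1; apply: val_inj => /=; rewrite HS.2.1.2.2.
case: (HS.2.2 _ QT jT QTRB jTh) => g [[[Hgl [Hg1 Hgm]] [HgP Hgj]] _].
case: (HS.2.2 _ P j HP HS.2.1) => g0 [_ Hu].
have E1 := Hu (fun x => x) (conj (conj (fun a x y => erefl) (conj erefl (fun x y => erefl)))
   (conj (fun x => erefl) (fun a => erefl))) x.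
have E2 : val (g x) = g0 x.
  apply: (Hu (fun x => val (g x))).
  split; last split.
  - split; first by move=> a x1 y1; rewrite Hgl.
    split; first by rewrite Hg1.
    by move=> x1 y1; rewrite Hgm.
  - by move=> x1; rewrite HgP.
  - by move=> a; rewrite Hgj.
rewrite /= in E1; rewrite E1 -E2.
exact: (asboolW (valP (g x))).
Qed.
End FreeInd.
Section Main.
Variables (k : comPzRingType) (lambda kappa mu : k).
Hypothesis (Hmu : mu ^+ 2 - lambda * mu + kappa = 0).
Variables (A : comAlgType k)
  (AA : comAlgType k) (tA : A -> A -> AA).
Hypothesis (HtA : is_tensor_alg tA).
Variables (AL AR : lmodType k) (tAL : AA -> A -> AL) (tAR : A -> AA -> AR).
Hypotheses (HtAL : is_tensor tAL) (HtAR : is_tensor tAR).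
Variables (DeltaA : A -> AA) (epsA : A -> k) (Af : nat -> A -> Prop).
Hypotheses (HA : is_bialgebra tA tAL tAR DeltaA epsA)
  (HAf : is_connected_filtered tA DeltaA epsA Af).
Variables (S : comAlgType k) (Pe : S -> S) (jA : A -> S).
Hypothesis (HS : is_free_comm_extRB lambda kappa Pe jA).
Variables (SS : comAlgType k) (tS : S -> S -> SS).
Hypothesis (HtS : is_tensor_alg tS).
Variables (SL SR : lmodType k) (tSL : SS -> S -> SL) (tSR : S -> SS -> SR).
Hypotheses (HtSL : is_tensor tSL) (HtSR : is_tensor tSR).
Variable (epse : S -> k).
Hypothesis (Hepse : alg_hom_k epse /\ (forall a, epse (jA a) = epsA a) /\
           (forall x, epse (Pe x) = - mu * epse x)).
Variables (jj : AA -> SS).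
Hypothesis (Hjj : induced tA (fun a b => tS (jA a) (jA b)) jj).
Variable (Pbar : SS -> SS).
Hypothesis (HPbar : induced tS (fun a b => tS (Pe a) (epse b *: 1) + mu *: tS a (epse b *: 1)
                                  + tS a (Pe b)) Pbar).
Variable (Deltae : S -> SS).
Hypothesis (HDeltae : alg_hom Deltae /\ (forall a, Deltae (jA a) = jj (DeltaA a)) /\
             (forall x, Deltae (Pe x) = Pbar (Deltae x))).

Let HtS1 : is_tensor tS := HtS.1.
Let HtA1 : is_tensor tA := HtA.1.
Let tS11 : tS 1 1 = 1 := HtS.2.1.
Let tSM a b c d : tS (a * c) (b * d) = tS a b * tS c d := HtS.2.2 a b c d.
Let PeL : klinear Pe := HS.1.1.
Let PeRB : forall x y, Pe x * Pe y = Pe (x * Pe y) + Pe (Pe x * y) + lambda *: Pe (x * y)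
                          + kappa *: (x * y) := HS.1.2.
Let jL : klinear jA := HS.2.1.1.
Let j1 : jA 1 = 1 := HS.2.1.2.1.
Let jM x y : jA (x * y) = jA x * jA y := HS.2.1.2.2 x y.
Let eL : klinK epse := Hepse.1.1.
Let e1 : epse 1 = 1 := Hepse.1.2.1.
Let eM x y : epse (x * y) = epse x * epse y := Hepse.1.2.2 x y.
Let ej a : epse (jA a) = epsA a := Hepse.2.1 a.
Let eP x : epse (Pe x) = - mu * epse x := Hepse.2.2 x.
Let DL : klinear Deltae := HDeltae.1.1.
Let D1 : Deltae 1 = 1 := HDeltae.1.2.1.
Let DM x y : Deltae (x * y) = Deltae x * Deltae y := HDeltae.1.2.2 x y.
Let Dj a : Deltae (jA a) = jj (DeltaA a) := HDeltae.2.1 a.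
Let DP x : Deltae (Pe x) = Pbar (Deltae x) := HDeltae.2.2 x.
Let PbL : klinear Pbar := HPbar.1.
Let PbE u v : Pbar (tS u v) = tS (Pe u) (epse v *: 1) + mu *: tS u (epse v *: 1)
                                  + tS u (Pe v) := HPbar.2 u v.
Let jjL : klinear jj := Hjj.1.
Let jjE a b : jj (tA a b) = tS (jA a) (jA b) := Hjj.2 a b.
Let DAL : klinear DeltaA := HA.1.1.
Let eAL : klinK epsA := HA.2.1.1.

Lemma eZ1 c : epse (c *: 1) = c.
Proof. by rewrite (klinKZ eL) e1 mulr1. Qed.

Lemma uniq_id (h : S -> S) : alg_hom h -> (forall x, h (Pe x) = Pe (h x)) ->
  (forall a, h (jA a) = jA a) -> forall x, h x = x.
Proof.
move=> Hh HP Hj x.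
case: (HS.2.2 _ Pe jA HS.1 HS.2.1) => g0 [_ Hu].
have E1 := Hu (fun x => x) (conj (conj (fun a x y => erefl) (conj erefl (fun x y => erefl)))
   (conj (fun x => erefl) (fun a => erefl))) x.
by rewrite /= in E1; rewrite (Hu h (conj Hh (conj HP Hj)) x) -E1.
Qed.

Lemma g_mul (g : SS -> S) (f : S -> S -> S) : kbilinear f -> induced tS f g ->
  (forall a b c d, f (a * c) (b * d) = f a b * f c d) ->
  forall Z Z', g (Z * Z') = g Z * g Z'.
Proof.
move=> Bf [Hgl Hg2] Hm Z Z'.
have L1 : forall W, klinear (fun Z => g (Z * W)) by move=> W; exact: (klin_comp (klin_mulr W) Hgl).
have L2 : forall W, klinear (fun Z => g Z * g W) by move=> W; exact: (klin_comp Hgl (klin_mulr (g W))).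
apply: (tens_ext HtS1 (L1 Z') (L2 Z') _ Z) => a b.
have L3 : klinear (fun W => g (tS a b * W)) by exact: (klin_comp (klin_mull (tS a b)) Hgl).
have L4 : klinear (fun W => g (tS a b) * g W) by exact: (klin_comp Hgl (klin_mull (g (tS a b)))).
apply: (tens_ext HtS1 L3 L4 _ Z') => c d.
by rewrite -tSM !Hg2 Hm.
Qed.

Lemma counitL : forall g : SS -> S, induced tS (fun a b => epse a *: b) g ->
     forall x, g (Deltae x) = x.
Proof.
move=> g Hg.
have Bf : kbilinear (fun a b : S => epse a *: b) := bil_epsl _ eL.
have [Hgl Hg2] := Hg.
pose gA := indm tA (fun a b => epsA a *: b).
have BA : kbilinear (fun a b : A => epsA a *: b) := bil_epsl _ eAL.
have gjj : forall Y, g (jj Y) = jA (gA Y).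
  apply: (tens_ext HtA1 (klin_comp jjL Hgl) (klin_comp (indm_lin HtA1 BA) jL)) => a b.
  by rewrite jjE Hg2 /gA (indm_t HtA1) // ej (klinZ jL).
have gP : forall Z, g (Pbar Z) = Pe (g Z).
  apply: (tens_ext HtS1 (klin_comp PbL Hgl) (klin_comp Hgl PeL)) => u v.
  rewrite PbE !(klinD Hgl) (klinZ Hgl) !Hg2 eP (klinZ PeL).
  by rewrite [mu *: _]scalerA mulNr scaleNr addNr add0r.
apply: uniq_id.
- split; first exact: klin_comp DL Hgl.
  split; first by rewrite D1 -tS11 Hg2 e1 scale1r.
  move=> x y; rewrite DM (g_mul Bf Hg) // => a b c d.
  by rewrite eM -scalerAl -scalerAr scalerA.
- by move=> x; rewrite DP gP.
- by move=> a; rewrite Dj gjj (HA.2.2.2.1 gA (indmP HtA1 BA)).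
Qed.

Lemma counitR : forall g : SS -> S, induced tS (fun a b => epse b *: a) g ->
     forall x, g (Deltae x) = x.
Proof.
move=> g Hg.
have Bf : kbilinear (fun a b : S => epse b *: a) := bil_epsr _ eL.
have [Hgl Hg2] := Hg.
pose gA := indm tA (fun a b => epsA b *: a).
have BA : kbilinear (fun a b : A => epsA b *: a) := bil_epsr _ eAL.
have gjj : forall Y, g (jj Y) = jA (gA Y).
  apply: (tens_ext HtA1 (klin_comp jjL Hgl) (klin_comp (indm_lin HtA1 BA) jL)) => a b.
  by rewrite jjE Hg2 /gA (indm_t HtA1) // ej (klinZ jL).
have gP : forall Z, g (Pbar Z) = Pe (g Z).
  apply: (tens_ext HtS1 (klin_comp PbL Hgl) (klin_comp Hgl PeL)) => u v.
  rewrite PbE !(klinD Hgl) (klinZ Hgl) !Hg2 eP (klinZ PeL).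
  by rewrite !eZ1 [mu *: (_ *: u)]scalerA mulNr scaleNr addrK.
apply: uniq_id.
- split; first exact: klin_comp DL Hgl.
  split; first by rewrite D1 -tS11 Hg2 e1 scale1r.
  move=> x y; rewrite DM (g_mul Bf Hg) // => a b c d.
  by rewrite eM -scalerAl -scalerAr scalerA mulrC.
- by move=> x; rewrite DP gP.
- by move=> a; rewrite Dj gjj (HA.2.2.2.2 gA (indmP HtA1 BA)).
Qed.


Let HtA1' := HtA1.
Lemma tSL_lin Y : klinear (tSL Y). Proof. exact: (tlinl HtSL Y). Qed.
Lemma tSL_linr c : klinear (fun Y => tSL Y c). Proof. exact: (tlinr HtSL c). Qed.
Lemma tSR_lin a : klinear (tSR a). Proof. exact: (tlinl HtSR a). Qed.
Lemma tSR_linr Y : klinear (fun a => tSR a Y). Proof. exact: (tlinr HtSR Y). Qed.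
Lemma tS_lin a : klinear (tS a). Proof. exact: (tlinl HtS1 a). Qed.
Lemma tS_linr b : klinear (fun a => tS a b). Proof. exact: (tlinr HtS1 b). Qed.

Definition lamL (Y : SS) (c : S) : SL -> SL := indm tSL (fun Y' c' => tSL (Y * Y') (c * c')).
Lemma lamL_bil Y c : kbilinear (fun Y' c' => tSL (Y * Y') (c * c')).
Proof.
split=> [Y'|c'].
  exact: (klin_comp (klin_mull c) (tSL_lin _)).
exact: (klin_comp (klin_mull Y) (tSL_linr _)).
Qed.
Lemma lamL_lin Y c : klinear (lamL Y c). Proof. exact: (indm_lin HtSL (lamL_bil Y c)). Qed.
Lemma lamL_t Y c Y' c' : lamL Y c (tSL Y' c') = tSL (Y * Y') (c * c').
Proof. exact: (indm_t HtSL (lamL_bil Y c)). Qed.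
Lemma lamL_fbil : kbilinear (fun (Y : SS) (c : S) => (lamL Y c : SL -> SL)).
Proof.
split=> [Y|c]; apply: klin_fun => E.
  apply: (indm_param HtSL (fam := fun c => fun Y' c' => tSL (Y * Y') (c * c'))) => //.
    by move=> c; apply: lamL_bil.
  move=> Y' c'; exact: (klin_comp (klin_mulr c') (tSL_lin _)).
apply: (indm_param HtSL (fam := fun Y => fun Y' c' => tSL (Y * Y') (c * c'))) => //.
  by move=> Y; apply: lamL_bil.
move=> Y' c'; exact: (klin_comp (klin_mulr Y') (tSL_linr _)).
Qed.
Definition mL : SL -> SL -> SL := indm tSL (fun Y c => (lamL Y c : SL -> SL)).
Lemma mL_linl W : klinear (fun E => mL E W).
Proof. exact: klin_eval (indm_lin HtSL lamL_fbil). Qed.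
Lemma mL_t Y c : mL (tSL Y c) = lamL Y c.
Proof. exact: (indm_t HtSL lamL_fbil Y c). Qed.
Lemma mL_linr E : klinear (mL E).
Proof.
move=> a x y.
pose F1 := fun E => mL E (a *: x + y).
pose F2 := fun E => a *: mL E x + mL E y.
apply: (tens_ext HtSL (g := F1) (g' := F2)).
- exact: mL_linl.
- exact: klin_comb (mL_linl _) (mL_linl _).
by move=> Y c; rewrite /F1 /F2 !mL_t lamL_lin.
Qed.

Definition lamR (a : S) (Y : SS) : SR -> SR := indm tSR (fun a' Y' => tSR (a * a') (Y * Y')).
Lemma lamR_bil a Y : kbilinear (fun a' Y' => tSR (a * a') (Y * Y')).
Proof.
split=> [a'|Y'].
  exact: (klin_comp (klin_mull Y) (tSR_lin _)).
exact: (klin_comp (klin_mull a) (tSR_linr _)).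
Qed.
Lemma lamR_lin a Y : klinear (lamR a Y). Proof. exact: (indm_lin HtSR (lamR_bil a Y)). Qed.
Lemma lamR_t a Y a' Y' : lamR a Y (tSR a' Y') = tSR (a * a') (Y * Y').
Proof. exact: (indm_t HtSR (lamR_bil a Y)). Qed.
Lemma lamR_fbil : kbilinear (fun (a : S) (Y : SS) => (lamR a Y : SR -> SR)).
Proof.
split=> [a|Y]; apply: klin_fun => E.
  apply: (indm_param HtSR (fam := fun Y => fun a' Y' => tSR (a * a') (Y * Y'))) => //.
    by move=> Y; apply: lamR_bil.
  move=> a' Y'; exact: (klin_comp (klin_mulr Y') (tSR_lin _)).
apply: (indm_param HtSR (fam := fun a => fun a' Y' => tSR (a * a') (Y * Y'))) => //.
  by move=> a; apply: lamR_bil.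
move=> a' Y'; exact: (klin_comp (klin_mulr a') (tSR_linr _)).
Qed.
Definition mR : SR -> SR -> SR := indm tSR (fun a Y => (lamR a Y : SR -> SR)).
Lemma mR_linl W : klinear (fun E => mR E W).
Proof. exact: klin_eval (indm_lin HtSR lamR_fbil). Qed.
Lemma mR_t a Y : mR (tSR a Y) = lamR a Y.
Proof. exact: (indm_t HtSR lamR_fbil a Y). Qed.
Lemma mR_linr E : klinear (mR E).
Proof.
move=> a x y.
pose F1 := fun E => mR E (a *: x + y).
pose F2 := fun E => a *: mR E x + mR E y.
apply: (tens_ext HtSR (g := F1) (g' := F2)).
- exact: mR_linl.
- exact: klin_comb (mR_linl _) (mR_linl _).
by move=> b Y; rewrite /F1 /F2 !mR_t lamR_lin.
Qed.


Lemma eZ1_lin : klinear (fun c : S => epse c *: (1 : S)).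
Proof. exact: klinK_scale1 eL. Qed.

Lemma coassoc : forall (f1 : SS -> SL) (f2 : SS -> SR) (al : SL -> SR),
     induced tS (fun a b => tSL (Deltae a) b) f1 ->
     induced tS (fun a b => tSR a (Deltae b)) f2 ->
     assoc_spec tS tSL tSR al ->
     forall x, al (f1 (Deltae x)) = f2 (Deltae x).
Proof.
move=> f1 f2 al [Hf1l Hf1t] [Hf2l Hf2t] [Hall Halt].
have f1M : forall Z Z', f1 (Z * Z') = mL (f1 Z) (f1 Z').
  move=> Z Z'.
  apply: (tens_ext HtS1 (g := fun Z => f1 (Z * Z')) (g' := fun Z => mL (f1 Z) (f1 Z'))).
  - exact: (klin_comp (klin_mulr Z') Hf1l).
  - exact: (klin_comp Hf1l (mL_linl _)).
  move=> a b.
  apply: (tens_ext HtS1 (g := fun W => f1 (tS a b * W)) (g' := fun W => mL (f1 (tS a b)) (f1 W))).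
  - exact: (klin_comp (klin_mull _) Hf1l).
  - exact: (klin_comp Hf1l (mL_linr _)).
  by move=> c d; rewrite -tSM !Hf1t DM mL_t lamL_t.
have f2M : forall Z Z', f2 (Z * Z') = mR (f2 Z) (f2 Z').
  move=> Z Z'.
  apply: (tens_ext HtS1 (g := fun Z => f2 (Z * Z')) (g' := fun Z => mR (f2 Z) (f2 Z'))).
  - exact: (klin_comp (klin_mulr Z') Hf2l).
  - exact: (klin_comp Hf2l (mR_linl _)).
  move=> a b.
  apply: (tens_ext HtS1 (g := fun W => f2 (tS a b * W)) (g' := fun W => mR (f2 (tS a b)) (f2 W))).
  - exact: (klin_comp (klin_mull _) Hf2l).
  - exact: (klin_comp Hf2l (mR_linr _)).
  by move=> c d; rewrite -tSM !Hf2t DM mR_t lamR_t.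
have alM : forall E E', al (mL E E') = mR (al E) (al E').
  move=> E E'.
  apply: (tens_ext2L HtS1 HtSL (g := fun E => al (mL E E')) (g' := fun E => mR (al E) (al E'))).
  - exact: (klin_comp (mL_linl _) Hall).
  - exact: (klin_comp Hall (mR_linl _)).
  move=> a b c.
  apply: (tens_ext2L HtS1 HtSL (g := fun W => al (mL (tSL (tS a b) c) W))
       (g' := fun W => mR (al (tSL (tS a b) c)) (al W))).
  - exact: (klin_comp (mL_linr _) Hall).
  - exact: (klin_comp Hall (mR_linr _)).
  move=> a' b' c'.
  by rewrite mL_t lamL_t -tSM !Halt mR_t lamR_t -tSM.
pose gc := indm tS (fun a b => epse a *: b).
have Bgc : kbilinear (fun a b : S => epse a *: b) := bil_epsl _ eL.
have gcL := indm_lin HtS1 Bgc.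
have gcD : forall v, gc (Deltae v) = v := counitL (indmP HtS1 Bgc).
have gct : forall a b, gc (tS a b) = epse a *: b := indm_t HtS1 Bgc.
have BPL : kbilinear (fun Y c => tSL (Pbar Y) (epse c *: 1) + mu *: tSL Y (epse c *: 1) + tSL Y (Pe c)).
  split=> [Y|c].
    apply: klin_add; last exact: (klin_comp PeL (tSL_lin _)).
    apply: klin_add; first exact: (klin_comp eZ1_lin (tSL_lin _)).
    exact: klin_scale (klin_comp eZ1_lin (tSL_lin _)).
  apply: klin_add; last exact: tSL_linr.
  apply: klin_add; first exact: (klin_comp PbL (tSL_linr _)).
  exact: klin_scale (tSL_linr _).
pose PL := indm tSL (fun Y c => tSL (Pbar Y) (epse c *: 1) + mu *: tSL Y (epse c *: 1) + tSL Y (Pe c)).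
have BPR : kbilinear (fun a Y => tSR (Pe a) (epse (gc Y) *: 1) + mu *: tSR a (epse (gc Y) *: 1) + tSR a (Pbar Y)).
  split=> [a|Y].
    apply: klin_add; last exact: (klin_comp PbL (tSR_lin _)).
    have E1 : klinear (fun Y => epse (gc Y) *: (1 : SS)).
      exact: (klin_comp gcL (@klinK_scale1 _ _ SS _ eL)).
    apply: klin_add; first exact: (klin_comp E1 (tSR_lin _)).
    exact: klin_scale (klin_comp E1 (tSR_lin _)).
  apply: klin_add; last exact: tSR_linr.
  apply: klin_add; first exact: (klin_comp PeL (tSR_linr _)).
  exact: klin_scale (tSR_linr _).
pose PR := indm tSR (fun a Y => tSR (Pe a) (epse (gc Y) *: 1) + mu *: tSR a (epse (gc Y) *: 1) + tSR a (Pbar Y)).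
have PLL := indm_lin HtSL BPL; have PRL := indm_lin HtSR BPR.
have f1P : forall Z, f1 (Pbar Z) = PL (f1 Z).
  apply: (tens_ext HtS1 (klin_comp PbL Hf1l) (klin_comp Hf1l PLL)) => u v.
  rewrite PbE !(klinD Hf1l) (klinZ Hf1l) !Hf1t /PL (indm_t HtSL) //.
  by rewrite DP.
have f2P : forall Z, f2 (Pbar Z) = PR (f2 Z).
  apply: (tens_ext HtS1 (klin_comp PbL Hf2l) (klin_comp Hf2l PRL)) => u v.
  rewrite PbE !(klinD Hf2l) (klinZ Hf2l) !Hf2t /PR (indm_t HtSR) //.
  by rewrite DP gcD !(klinZ DL) D1.
have alP : forall E, al (PL E) = PR (al E).
  apply: (tens_ext2L HtS1 HtSL (klin_comp PLL Hall) (klin_comp Hall PRL)) => u v w.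
  rewrite Halt /PL /PR !(indm_t HtSL) // !(indm_t HtSR) // PbE gct.
  rewrite (klinKZ eL) !(klinD (tSL_linr _)) (klinZ (tSL_linr _)).
  rewrite !(klinD Hall) !(klinZ Hall) !Halt.
  rewrite PbE !(klinD (tSR_lin _)).
  have -> : tS (epse v *: 1) (epse w *: 1) = (epse v * epse w) *: 1 :> SS.
    by rewrite (klinZ (tS_linr _)) (klinZ (tS_lin _)) tS11 scalerA mulrC.
  by rewrite !(klinZ (tSR_lin _)) -!addrA.
have [alA HalA] := assoc_exists HtA1 HtAL HtAR.
have Bf1A : kbilinear (fun a b => tAL (DeltaA a) b).
  split=> [m|n]; first exact: tlinl.
  exact: (klin_comp DAL (tlinr HtAL n)).
have Bf2A : kbilinear (fun a b => tAR a (DeltaA b)).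
  split=> [m|n]; last exact: tlinr.
  exact: (klin_comp DAL (tlinl HtAR m)).
pose f1A := indm tA (fun a b => tAL (DeltaA a) b).
pose f2A := indm tA (fun a b => tAR a (DeltaA b)).
have CAA := HA.2.2.1 f1A f2A alA (indmP HtA1 Bf1A) (indmP HtA1 Bf2A) HalA.
have BJL : kbilinear (fun Y c => tSL (jj Y) (jA c)).
  split=> [Y|c]; first exact: (klin_comp jL (tSL_lin _)).
  exact: (klin_comp jjL (tSL_linr _)).
have BJR : kbilinear (fun a Y => tSR (jA a) (jj Y)).
  split=> [a|Y]; first exact: (klin_comp jjL (tSR_lin _)).
  exact: (klin_comp jL (tSR_linr _)).
pose JL := indm tAL (fun Y c => tSL (jj Y) (jA c)).
pose JR := indm tAR (fun a Y => tSR (jA a) (jj Y)).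
have JLL := indm_lin HtAL BJL; have JRL := indm_lin HtAR BJR.
have f1J : forall Y, f1 (jj Y) = JL (f1A Y).
  apply: (tens_ext HtA1 (klin_comp jjL Hf1l) (klin_comp (indm_lin HtA1 Bf1A) JLL)) => a b.
  by rewrite jjE Hf1t /f1A (indm_t HtA1) // /JL (indm_t HtAL) // Dj.
have f2J : forall Y, f2 (jj Y) = JR (f2A Y).
  apply: (tens_ext HtA1 (klin_comp jjL Hf2l) (klin_comp (indm_lin HtA1 Bf2A) JRL)) => a b.
  by rewrite jjE Hf2t /f2A (indm_t HtA1) // /JR (indm_t HtAR) // Dj.
have alJ : forall W, al (JL W) = JR (alA W).
  apply: (tens_ext2L HtA1 HtAL (klin_comp JLL Hall) (klin_comp HalA.1 JRL)) => a b c.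
  by rewrite /JL (indm_t HtAL) // jjE Halt HalA.2 /JR (indm_t HtAR) // jjE.
apply: (free_ind HS (C := fun x => al (f1 (Deltae x)) = f2 (Deltae x))).
- move=> a x y Hx Hy.
  by rewrite DL (klinD Hf1l) (klinZ Hf1l) (klinD Hall) (klinZ Hall) Hx Hy (klinD Hf2l) (klinZ Hf2l).
- by move=> x y Hx Hy; rewrite DM f1M alM Hx Hy f2M.
- by move=> a; rewrite Dj f1J alJ CAA f2J.
- by move=> x Hx; rewrite DP f1P alP Hx f2P.
Qed.


Lemma span_img (M N : lmodType k) (f : M -> N) (G : M -> Prop) (G' : N -> Prop) :
  klinear f -> (forall z, G z -> Defs.span G' (f z)) ->
  forall z, Defs.span G z -> Defs.span G' (f z).
Proof.
move=> Hf HG z; elim=> [|x Gx|a x y _ IHx _ IHy].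
- by rewrite (klin0 Hf); exact: span0.
- exact: HG.
- by rewrite Hf; apply: span_comb.
Qed.

Lemma span_add (M : lmodType k) (G : M -> Prop) x y :
  Defs.span G x -> Defs.span G y -> Defs.span G (x + y).
Proof. by move=> Hx Hy; rewrite -[x]scale1r; apply: span_comb. Qed.
Lemma span_scale (M : lmodType k) (G : M -> Prop) a x :
  Defs.span G x -> Defs.span G (a *: x).
Proof. by move=> Hx; rewrite -[a *: x]addr0; apply: span_comb => //; exact: span0. Qed.

Let HAF := HAf.1.
Lemma Af_mono n m a : (n <= m)%N -> Af n a -> Af m a.
Proof.
move=> /subnK <-; elim: (m - n)%N => [//|d IH] Ha.
by rewrite addSn; apply: HAF.2.1; apply: IH.
Qed.

Lemma deg_ex a : exists d, is_deg Af a d.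
Proof.
have [n Hn] := HAF.2.2.1 a.
have e : exists n, `[< Af n a >] by exists n; apply/asboolP.
case: (ex_minnP e) => m /asboolP Hm Hmin.
exists m; split => // e' He'; apply: Hmin; exact/asboolP.
Qed.

Definition dg (a : A) : nat := projT1 (cid (deg_ex a)).
Lemma dgP a : is_deg Af a (dg a). Proof. exact: (projT2 (cid (deg_ex a))). Qed.
Lemma dg_Af a : Af (dg a) a. Proof. exact: (dgP a).1. Qed.
Lemma dg_min a e : Af e a -> (dg a <= e)%N. Proof. exact: (dgP a).2. Qed.
Lemma deg_uniq a d : is_deg Af a d -> d = dg a.
Proof. by move=> [H1 H2]; apply/eqP; rewrite eqn_leq; apply/andP; split; [apply: H2; exact: dg_Af | exact: dg_min]. Qed.
Lemma dg1 : dg 1 = 0%N.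
Proof.
apply/eqP; rewrite -leqn0; apply: dg_min; apply/(HAf.2 1).2.
by exists 1; rewrite scale1r.
Qed.
Lemma dgM a b : (dg (a * b) <= dg a + dg b)%N.
Proof. by apply: dg_min; apply: HAF.2.2.2.1; apply: dg_Af. Qed.

Definition wD (a0 : A) (l : seq A) : nat := (sumn (map dg (a0 :: l)) + size l)%N.
Definition word (a0 : A) (l : seq A) : S := sha_word Pe jA a0 l.
Let Fil := sha_filtration Pe jA Af.

Lemma wD_cons a0 a1 m : wD a0 (a1 :: m) = (dg a0 + wD a1 m).+1.
Proof. by rewrite /wD /= addnS !addnA. Qed.
Lemma wD_nil a0 : wD a0 [::] = dg a0.
Proof. by rewrite /wD /= !addn0. Qed.

Lemma Fil_word n a0 l : (wD a0 l <= n)%N -> Fil n (word a0 l).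
Proof.
move=> Hn; apply: span_gen; exists a0, l, (map dg (a0 :: l)); split => //.
split; first by rewrite size_map.
split => // i Hi.
by rewrite (nth_map a0) //; apply: dgP.
Qed.

Lemma Gen_word n z : (exists (a0 : A) (l : seq A) (ds : seq nat),
          z = sha_word Pe jA a0 l /\
          size ds = (size l).+1 /\
          (forall i, (i < (size l).+1)%N -> is_deg Af (nth a0 (a0 :: l) i) (nth 0%N ds i)) /\
          (sumn ds + size l <= n)%N) -> exists a0 l, z = word a0 l /\ (wD a0 l <= n)%N.
Proof.
move=> [a0 [l [ds [-> [Hs [Hd Hn]]]]]]; exists a0, l; split => //.
suff E : map dg (a0 :: l) = ds by rewrite /wD E.
apply: (@eq_from_nth _ 0%N); first by rewrite size_map Hs.
move=> i; rewrite size_map => Hi.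
by rewrite (nth_map a0) // -(deg_uniq (Hd i Hi)).
Qed.

Lemma Fil_ind n (M : lmodType k) (f : S -> M) (G' : M -> Prop) : klinear f ->
  (forall a0 l, (wD a0 l <= n)%N -> Defs.span G' (f (word a0 l))) ->
  forall x, Fil n x -> Defs.span G' (f x).
Proof.
move=> Hf Hw; apply: span_img => // z /Gen_word [a0 [l [-> Hl]]]; exact: Hw.
Qed.

Lemma Fil_mono n m x : (n <= m)%N -> Fil n x -> Fil m x.
Proof.
move=> Hnm; apply: (Fil_ind (f := fun x => x)) => // a0 l Hl.
by apply: Fil_word; apply: leq_trans Hnm.
Qed.

Lemma Fil_lin n a x y : Fil n x -> Fil n y -> Fil n (a *: x + y).
Proof. exact: span_comb. Qed.
Lemma Fil_add n x y : Fil n x -> Fil n y -> Fil n (x + y). Proof. exact: span_add. Qed.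
Lemma Fil_scale n a x : Fil n x -> Fil n (a *: x). Proof. exact: span_scale. Qed.

Lemma Fil_P n x : Fil n x -> Fil n.+1 (Pe x).
Proof.
apply: (Fil_ind (f := Pe)) => // a0 l Hl.
have -> : Pe (word a0 l) = word 1 (a0 :: l) by rewrite /word /= j1 mul1r.
by apply: Fil_word; rewrite wD_cons dg1.
Qed.

Lemma word_j c a0 l : jA c * word a0 l = word (c * a0) l.
Proof. by case: l => [|a1 m]; rewrite /word /= jM // mulrA. Qed.

Lemma Fil_j c n x : Fil n x -> Fil (dg c + n) (jA c * x).
Proof.
apply: (Fil_ind (f := fun x => jA c * x)); first exact: klin_mull.
move=> a0 l Hl; rewrite word_j; apply: Fil_word.
case: l Hl => [|a1 m]; rewrite ?wD_nil ?wD_cons => Hl.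
  by have := dgM c a0; lia.
by have := dgM c a0; lia.
Qed.

Lemma Fil_one n c : Fil n (c *: 1).
Proof.
rewrite -[c *: 1]addr0; apply: Fil_lin; last exact: span0.
by rewrite -j1; apply: (Fil_word (l := [::])); rewrite wD_nil dg1.
Qed.

Lemma word_mul N : forall a0 l b0 l', (size l + size l' <= N)%N ->
  Fil (wD a0 l + wD b0 l') (word a0 l * word b0 l').
Proof.
elim: N => [|N IH] a0 l b0 l' HN.
  case: l HN => [|? ?] //; case: l' => [|? ?] // _.
  rewrite !wD_nil /word /= -jM; apply: (Fil_word (l := [::])); rewrite wD_nil.
  exact: dgM.
case: l HN => [|a1 m] HN.
  by rewrite wD_nil; apply: Fil_j; apply: Fil_word.
case: l' HN => [|b1 m'] HN.
  rewrite mulrC addnC wD_nil; apply: Fil_j; exact: Fil_word.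
rewrite !wD_cons.
have -> : word a0 (a1 :: m) * word b0 (b1 :: m') =
  jA (a0 * b0) * (Pe (word a1 m) * Pe (word b1 m')).
  by rewrite /word /= jM mulrACA.
rewrite PeRB.
set u := word a1 m; set v := word b1 m'.
have Hu : Pe u = word 1 (a1 :: m) by rewrite /word /= j1 mul1r.
have Hv : Pe v = word 1 (b1 :: m') by rewrite /word /= j1 mul1r.
have T : Fil (wD a1 m + wD b1 m').+2
   (Pe (u * Pe v) + Pe (Pe u * v) + lambda *: Pe (u * v) + kappa *: (u * v)).
  have Huv : Fil (wD a1 m + wD b1 m') (u * v) by apply: IH; move: HN => /=; lia.
  apply: Fil_add; last by apply: Fil_scale; apply: Fil_mono Huv; lia.
  apply: Fil_add; last by apply: Fil_scale; apply: Fil_mono (Fil_P Huv); lia.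
  apply: Fil_add.
    have := Fil_P (IH a1 m 1 (b1 :: m') _); rewrite Hv; move/(_ _)/Fil_mono; apply.
      by rewrite wD_cons dg1; lia.
    by move: HN => /=; lia.
  have := Fil_P (IH 1 (a1 :: m) b1 m' _); rewrite Hu; move/(_ _)/Fil_mono; apply.
    by rewrite wD_cons dg1; lia.
  by move: HN => /=; lia.
apply: Fil_mono (Fil_j (a0 * b0) T).
by have := dgM a0 b0; lia.
Qed.

Lemma Fil_mul p q x y : Fil p x -> Fil q y -> Fil (p + q) (x * y).
Proof.
move=> Hx Hy.
apply: (Fil_ind (f := fun x => x * y)) Hx; first exact: klin_mulr.
move=> a0 l Hl.
apply: (Fil_ind (f := fun y => word a0 l * y)) Hy; first exact: klin_mull.
move=> b0 l' Hl'.
have H := @word_mul _ a0 l b0 l' (leqnn _).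
have Hle : (wD a0 l + wD b0 l' <= p + q)%N by lia.
exact: (Fil_mono Hle H).
Qed.

Lemma Fil_all x : exists n, Fil n x.
Proof.
apply: (free_ind HS (C := fun x => exists n, Fil n x)).
- move=> a x1 y1 [n1 H1] [n2 H2]; exists (maxn n1 n2).
  by apply: Fil_lin; [apply: (Fil_mono (leq_maxl n1 n2) H1) | apply: (Fil_mono (leq_maxr n1 n2) H2)].
- by move=> x1 y1 [n1 H1] [n2 H2]; exists (n1 + n2)%N; apply: Fil_mul.
- by move=> a; exists (dg a); apply: (Fil_word (l := [::])); rewrite wD_nil.
- by move=> x1 [n H]; exists n.+1; apply: Fil_P.
Qed.

Lemma Fil0_scal x : Fil 0 x -> exists c, x = c *: 1.
Proof.
elim=> [|z Gz|a x1 y1 _ [c1 ->] _ [c2 ->]].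
- by exists 0; rewrite scale0r.
- have [a0 [l [-> Hl]]] := Gen_word Gz.
  case: l Hl => [|a1 m]; rewrite ?wD_nil ?wD_cons // => Hl.
  have Ha : Af 0 a0 by move: Hl; rewrite leqn0 => /eqP <-; apply: dg_Af.
  have [c ->] := (HAf.2 a0).1 Ha.
  by exists c; rewrite /word /= (klinZ jL) j1.
- by exists (a * c1 + c2); rewrite scalerDl scalerA.
Qed.


Definition TFg (n : nat) (z : SS) := exists p q u v, (p + q = n)%N /\ Fil p u /\ Fil q v /\ z = tS u v.
Definition TF n := Defs.span (TFg n).

Lemma TF_gen p q u v : Fil p u -> Fil q v -> TF (p + q) (tS u v).
Proof. by move=> Hu Hv; apply: span_gen; exists p, q, u, v. Qed.

Lemma TF_mono n m Z : (n <= m)%N -> TF n Z -> TF m Z.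
Proof.
move=> Hnm; apply: (span_img (f := fun Z => Z)) => // z [p [q [u [v [Epq [Hu [Hv ->]]]]]]].
have -> : m = (p + (q + (m - n)))%N by lia.
by apply: TF_gen => //; apply: Fil_mono Hv; lia.
Qed.

Lemma TF_mul p q Z Z' : TF p Z -> TF q Z' -> TF (p + q) (Z * Z').
Proof.
move=> HZ HZ'.
apply: (span_img (f := fun Z => Z * Z')) HZ; first exact: klin_mulr.
move=> z [p1 [q1 [u [v [E1 [Hu [Hv ->]]]]]]].
apply: (span_img (f := fun Z' => tS u v * Z')) HZ'; first exact: klin_mull.
move=> z' [p2 [q2 [u' [v' [E2 [Hu' [Hv' ->]]]]]]].
rewrite -tSM.
have -> : (p + q = (p1 + p2) + (q1 + q2))%N by lia.
by apply: TF_gen; apply: Fil_mul.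
Qed.

Lemma TF_Pbar n Z : TF n Z -> TF n.+1 (Pbar Z).
Proof.
apply: span_img => // z [p [q [u [v [Epq [Hu [Hv ->]]]]]]].
rewrite PbE.
apply: span_add; first apply: span_add.
- have -> : n.+1 = (p.+1 + q)%N by lia.
  by apply: TF_gen; [apply: Fil_P | apply: Fil_one].
- apply: span_scale; have -> : n.+1 = (p.+1 + q)%N by lia.
  by apply: TF_gen; [apply: Fil_mono Hu | apply: Fil_one].
- have -> : n.+1 = (p + q.+1)%N by lia.
  by apply: TF_gen => //; apply: Fil_P.
Qed.

Lemma TF_jj n a : Af n a -> TF n (jj (DeltaA a)).
Proof.
move=> Ha; have := HAF.2.2.2.2.1 n a Ha.
apply: span_img => // z [p [q [u [v [Epq [Hu [Hv ->]]]]]]].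
rewrite jjE -Epq; apply: TF_gen.
  by apply: (Fil_word (l := [::])); rewrite wD_nil; apply: dg_min.
by apply: (Fil_word (l := [::])); rewrite wD_nil; apply: dg_min.
Qed.

Lemma TF_word l a0 : TF (wD a0 l) (Deltae (word a0 l)).
Proof.
elim: l a0 => [|a1 m IH] a0.
  by rewrite wD_nil /word /= Dj; apply: TF_jj; apply: dg_Af.
rewrite wD_cons /word /= DM Dj DP -addnS.
by apply: TF_mul; [apply: TF_jj; apply: dg_Af | apply: TF_Pbar; apply: IH].
Qed.

Lemma Fil_TF n x : Fil n x -> TF n (Deltae x).
Proof.
apply: Fil_ind => // a0 l Hl.
exact: TF_mono Hl (TF_word l a0).
Qed.

Lemma S_conn_filt : is_connected_filtered tS Deltae epse Fil.
Proof.
split; last first.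
  move=> x; split; first exact: Fil0_scal.
  by move=> [c ->]; apply: Fil_one.
split; first by move=> n; split; [exact: span0 | move=> a x y; exact: Fil_lin].
split; first by move=> n x; apply: Fil_mono.
split; first exact: Fil_all.
split; first by move=> p q x y; apply: Fil_mul.
split; first by move=> n x Hx; apply: Fil_TF.
move=> n; split; first by move=> c; apply: Fil_one.
split.
  move=> x Hx; exists (epse x), (x - epse x *: 1); split.
    by apply: Fil_add => //; rewrite -scaleNr; apply: Fil_one.
  split; first by rewrite (klinKB eL) eZ1 subrr.
  by rewrite addrC subrK.
by move=> c _; rewrite eZ1 => ->; rewrite scale0r.
Qed.

Lemma main_res : is_bialgebra tS tSL tSR Deltae epse /\
  is_connected_filtered tS Deltae epse (sha_filtration Pe jA Af) /\
  has_antipode tS Deltae epse.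
Proof.
have HB : is_bialgebra tS tSL tSR Deltae epse.
  split; first exact: HDeltae.1.
  split; first exact: Hepse.1.
  split; first exact: coassoc.
  by split; [exact: counitL | exact: counitR].
split => //; split; first exact: S_conn_filt.
exact: (hopf_antipode HtS HtSL HtSR HB S_conn_filt).
Qed.

End Main.

Unset Implicit Arguments.
Theorem theorem4p11
  (k : comPzRingType) (lambda kappa mu : k)
  (Hmu : mu ^+ 2 - lambda * mu + kappa = 0)
  (* the connected filtered commutative bialgebra A *)
  (A : comAlgType k)
  (AA : comAlgType k) (tA : A -> A -> AA) (HtA : is_tensor_alg tA)
  (AL AR : lmodType k) (tAL : AA -> A -> AL) (tAR : A -> AA -> AR)
  (HtAL : is_tensor tAL) (HtAR : is_tensor tAR)
  (DeltaA : A -> AA) (epsA : A -> k) (Af : nat -> A -> Prop)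
  (HA : is_bialgebra tA tAL tAR DeltaA epsA)
  (HAf : is_connected_filtered tA DeltaA epsA Af)
  (* the free commutative extended Rota-Baxter algebra Sha_e(A) *)
  (S : comAlgType k) (Pe : S -> S) (jA : A -> S)
  (HS : is_free_comm_extRB lambda kappa Pe jA)
  (SS : comAlgType k) (tS : S -> S -> SS) (HtS : is_tensor_alg tS)
  (SL SR : lmodType k) (tSL : SS -> S -> SL) (tSR : S -> SS -> SR)
  (HtSL : is_tensor tSL) (HtSR : is_tensor tSR)
  (* the counit eps_e *)
  (epse : S -> k)
  (Hepse : alg_hom_k epse /\ (forall a, epse (jA a) = epsA a) /\
           (forall x, epse (Pe x) = - mu * epse x))
  (* j_A (x) j_A : A (x) A -> Sha_e(A) (x) Sha_e(A) *)
  (jj : AA -> SS) (Hjj : induced tA (fun a b => tS (jA a) (jA b)) jj)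
  (* the operator Pbar on Sha_e(A) (x) Sha_e(A) *)
  (Pbar : SS -> SS)
  (HPbar : induced tS (fun a b => tS (Pe a) (epse b *: 1) + mu *: tS a (epse b *: 1)
                                  + tS a (Pe b)) Pbar)
  (* the coproduct Delta_e *)
  (Deltae : S -> SS)
  (HDeltae : alg_hom Deltae /\ (forall a, Deltae (jA a) = jj (DeltaA a)) /\
             (forall x, Deltae (Pe x) = Pbar (Deltae x))) :
  is_bialgebra tS tSL tSR Deltae epse /\
  is_connected_filtered tS Deltae epse (sha_filtration Pe jA Af) /\
  has_antipode tS Deltae epse.
Proof.
intros; eapply main_res; eassumption.
Qed.
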